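(* Any finite union of rational convex polyhedra of positive codimension in $\mathbb{R}^n$ (in particular, the union of all cells of any rational polyhedral complex all of whose cells have positive codimension) coincides with a tropical prevariety in $\mathbb{R}^n$.
   Context: A rational convex polyhedron is a set defined by finitely many linear equations and non-strict linear inequalities with integer coefficients. A tropical polynomial $f$ in $n$ variables is a function $f(x)=\min\{L_1(x),\dots,L_m(x)\}$ on $\mathbb{R}^n$, where each $L_j(x)=\sum_{i=1}^n a_{ji}x_i+b_j$ has non-negative integer coefficients $a_{ji}$ and real constant term $b_j$. The tropical hypersurface $V(f)$ is the set of points where this piecewise-linear function is not smooth. A tropical prevariety is a set of the form $V(f_1)\cap\cdots\cap V(f_k)$ for finitely many tropical polynomials. *)

(* Defs.v *)
From HB Require Import structures.
From mathcomp Require Import all_boot all_order all_algebra.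
From mathcomp Require Import reals.
Set Implicit Arguments. Unset Strict Implicit. Unset Printing Implicit Defensive.
Import Order.TTheory GRing.Theory Num.Theory.
Local Open Scope ring_scope.

(* A linear constraint with integer coefficients: (a, c) encodes a . x  (?)  c. *)
Definition int_constraint (n : nat) := ({ffun 'I_n -> int} * int)%type.

(* A rational convex polyhedron is given by finitely many linear equations
   (first component) and non-strict linear inequalities (second component),
   all with integer coefficients. *)
Definition rat_polyhedron (n : nat) :=
  (seq (int_constraint n) * seq (int_constraint n))%type.

Definition int_form {R : realType} (n : nat) (a : {ffun 'I_n -> int}) (x : 'I_n -> R) : R :=
  \sum_(i < n) (a i)%:~R * x i.

Definition in_polyhedron {R : realType} (n : nat) (P : rat_polyhedron n) (x : 'I_n -> R) : Prop :=
  (forall e, e \in P.1 -> int_form e.1 x = (e.2)%:~R) /\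
  (forall e, e \in P.2 -> int_form e.1 x <= (e.2)%:~R).

(* Positive codimension: the affine hull of the set is a proper affine subspace
   of R^n, i.e. the set is contained in some affine hyperplane a . x = c, a <> 0. *)
Definition positive_codim {R : realType} (n : nat) (S : ('I_n -> R) -> Prop) : Prop :=
  exists (a : 'I_n -> R) (c : R), (exists i, a i != 0) /\
    forall x, S x -> \sum_(i < n) a i * x i = c.

Definition trop_term (R : realType) (n : nat) := ({ffun 'I_n -> nat} * R)%type.

Definition eval_term {R : realType} (n : nat) (t : trop_term R n) (x : 'I_n -> R) : R :=
  \sum_(i < n) (t.1 i)%:R * x i + t.2.

Definition trop_poly (R : realType) (n : nat) := seq (trop_term R n).

Definition trop_eval {R : realType} (n : nat) (f : trop_poly R n) (x : 'I_n -> R) : R :=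
  match f with
  | [::] => 0
  | t :: ts => foldr (fun s acc => Num.min (eval_term s x) acc) (eval_term t x) ts
  end.

(* A function g : R^n -> R is smooth at x if it is C^oo on a neighbourhood of x.
   For the piecewise-linear functions considered here this means that g agrees
   with an affine function on a neighbourhood of x. *)
Definition pl_smooth_at {R : realType} (n : nat) (g : ('I_n -> R) -> R) (x : 'I_n -> R) : Prop :=
  exists (e : R) (a : 'I_n -> R) (b : R), 0 < e /\
    forall y, (forall i, `|y i - x i| < e) -> g y = \sum_(i < n) a i * y i + b.

Definition trop_hypersurface {R : realType} (n : nat) (f : trop_poly R n) (x : 'I_n -> R) : Prop :=
  ~ pl_smooth_at (trop_eval f) x.

Definition trop_prevariety {R : realType} (n : nat) (fs : seq (trop_poly R n)) (x : 'I_n -> R) : Prop :=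
  forall f, f \in fs -> trop_hypersurface f x.

(* Main.v *)
Require Import Defs.
From HB Require Import structures.
From mathcomp Require Import all_boot all_order all_algebra.
From mathcomp Require Import reals ring lra.
From Stdlib Require Import Classical.
Import Order.TTheory GRing.Theory Num.Theory.
Local Open Scope ring_scope.
Set Implicit Arguments. Unset Strict Implicit.

Lemma foldr_min_le (R : realType) n (x : 'I_n -> R) (t0 : trop_term R n) ts s :
  s \in t0 :: ts ->
  foldr (fun s acc => Num.min (eval_term s x) acc) (eval_term t0 x) ts <= eval_term s x.
Proof.
elim: ts s => [|s' ts IH] s; first by rewrite inE => /eqP ->.
rewrite !inE /= ge_min => /or3P [/eqP ->|/eqP ->|Hs].
- by rewrite (IH t0) ?orbT // inE eqxx.
- by rewrite lexx.
- by rewrite IH ?orbT // inE Hs orbT.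
Qed.

Lemma foldr_min_ex (R : realType) n (x : 'I_n -> R) (t0 : trop_term R n) ts :
  exists2 s, s \in t0 :: ts &
  foldr (fun s acc => Num.min (eval_term s x) acc) (eval_term t0 x) ts = eval_term s x.
Proof.
elim: ts => [|s' ts [s Hs IH]]; first by exists t0; rewrite ?inE.
rewrite /=; have [h|h] := leP (eval_term s' x) (foldr (fun s acc => Num.min (eval_term s x) acc) (eval_term t0 x) ts).
- by exists s'; rewrite ?min_l // !inE eqxx orbT.
- exists s; last exact: IH.
  by move: Hs; rewrite !inE => /orP [->|->]; rewrite ?orbT.
Qed.

Lemma trop_le (R : realType) n (f : trop_poly R n) x t :
  t \in f -> trop_eval f x <= eval_term t x.
Proof. by case: f => [//|t0 ts] Ht; apply: foldr_min_le. Qed.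

Lemma trop_ex (R : realType) n (f : trop_poly R n) x :
  f != [::] -> exists2 t, t \in f & trop_eval f x = eval_term t x.
Proof. by case: f => [//|t0 ts] _; apply: foldr_min_ex. Qed.

Lemma attain_iff (R : realType) n (f : trop_poly R n) x t :
  t \in f -> (eval_term t x = trop_eval f x <-> forall t', t' \in f -> eval_term t x <= eval_term t' x).
Proof.
move=> Ht; split.
- by move=> E t' Ht'; rewrite E trop_le.
- move=> H; apply/le_anti; rewrite trop_le // andbT.
  have [|t' Ht' ->] := trop_ex x (f := f); last exact: H.
  by apply/eqP => E; move: Ht; rewrite E.
Qed.

Definition Kink (R : realType) n (f : trop_poly R n) (x : 'I_n -> R) : Prop :=
  exists t1 t2, [/\ t1 \in f, t2 \in f, eval_term t1 x = trop_eval f x,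
                   eval_term t2 x = trop_eval f x & t1.1 != t2.1].

Definition bump (R : realType) n (x : 'I_n -> R) (i : 'I_n) (d : R) : 'I_n -> R :=
  fun j => x j + (if j == i then d else 0).

Lemma sum_bump (R : realType) n (c x : 'I_n -> R) i d :
  \sum_(j < n) c j * bump x i d j = \sum_(j < n) c j * x j + c i * d.
Proof.
rewrite /bump; under eq_bigr => j _ do rewrite mulrDr.
rewrite big_split /=; congr (_ + _).
rewrite (bigD1 i) //= eqxx big1 ?addr0 // => j /negbTE ->; by rewrite mulr0.
Qed.

Lemma eval_bump (R : realType) n (t : trop_term R n) x i d :
  eval_term t (bump x i d) = eval_term t x + (t.1 i)%:R * d.
Proof. by rewrite /eval_term sum_bump; ring. Qed.

Lemma kink_nonsmooth (R : realType) n (f : trop_poly R n) x :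
  Kink f x -> trop_hypersurface f x.
Proof.
move=> [t1 [t2 [H1 H2 E1 E2 Hne]]] [e [a [b [He Hs]]]].
have slope : forall t, t \in f -> eval_term t x = trop_eval f x ->
    forall i, a i = (t.1 i)%:R.
  move=> t Ht Et i.
  have key : forall d, `|d| < e -> a i * d <= (t.1 i)%:R * d.
    move=> d Hd.
    have Hy : forall j, `|bump x i d j - x j| < e.
      move=> j; rewrite /bump addrC addKr; case: (j == i) => //; by rewrite normr0.
    have Hx : forall j, `|x j - x j| < e by move=> j; rewrite subrr normr0.
    have := trop_le (bump x i d) Ht; rewrite (Hs _ Hy) eval_bump Et (Hs _ Hx) sum_bump.
    by rewrite addrAC lerD2l.
  have e2 : `|e / 2| < e by rewrite gtr0_norm ?divr_gt0 //; lra.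
  have e2' : `|- (e / 2)| < e by rewrite normrN.
  have k1 := key _ e2; have k2 := key _ e2'.
  have hp : 0 < e / 2 by rewrite divr_gt0.
  apply/le_anti/andP; split.
  - by rewrite -(ler_pM2r hp).
  - by move: k2; rewrite !mulrN lerN2 (ler_pM2r hp).
move/negP: Hne; apply; apply/eqP/ffunP => i.
have := slope _ H1 E1 i; rewrite (slope _ H2 E2 i) => /eqP; rewrite eqr_nat => /eqP //.
Qed.

Lemma common_pos (R : realType) (A : eqType) (s : seq A) (Q : A -> R -> Prop) :
  (forall r, r \in s -> exists2 T, 0 < T & forall t, 0 < t -> t <= T -> Q r t) ->
  exists2 T, 0 < T & forall t, 0 < t -> t <= T -> forall r, r \in s -> Q r t.
Proof.
elim: s => [|r s IH] H; first by exists 1.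
have [T HT HQ] : exists2 T, 0 < T & forall t, 0 < t -> t <= T -> forall r, r \in s -> Q r t.
  by apply: IH => r' Hr'; apply: H; rewrite inE Hr' orbT.
have [T' HT' HQ'] := H r (mem_head _ _).
exists (Num.min T T'); first by rewrite lt_min HT HT'.
move=> t Ht; rewrite le_min => /andP [H1 H2] r'; rewrite inE => /orP [/eqP ->|Hr'].
- exact: HQ'.
- exact: HQ.
Qed.

Lemma eval_diff (R : realType) n (t : trop_term R n) x y :
  eval_term t y - eval_term t x = \sum_(j < n) (t.1 j)%:R * (y j - x j).
Proof.
rewrite /eval_term.
have -> : \sum_(j < n) (t.1 j)%:R * (y j - x j) =
          \sum_(j < n) ((t.1 j)%:R * y j - (t.1 j)%:R * x j).
  by apply: eq_bigr => j _; rewrite mulrBr.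
rewrite sumrB; ring.
Qed.

Definition csum (R : realType) n (t : trop_term R n) : R := \sum_(j < n) (t.1 j)%:R.

Lemma csum_ge0 (R : realType) n (t : trop_term R n) : 0 <= csum t.
Proof. by apply: sumr_ge0 => j _; rewrite ler0n. Qed.

Lemma diff_bound (R : realType) n (t : trop_term R n) x y e :
  (forall j, `|y j - x j| < e) ->
  `|eval_term t y - eval_term t x| <= csum t * e.
Proof.
move=> H; rewrite eval_diff; apply: le_trans (ler_norm_sum _ _ _) _.
rewrite /csum mulr_suml; apply: ler_sum => j _.
rewrite normrM ger0_norm ?ler0n //; apply: ler_wpM2l; first by rewrite ler0n.
exact: ltW.
Qed.

Lemma cont_one (R : realType) n (t t' : trop_term R n) x :
  eval_term t x < eval_term t' x ->
  exists2 T, 0 < T & forall e, 0 < e -> e <= T ->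
    forall y, (forall j, `|y j - x j| < e) -> eval_term t y <= eval_term t' y.
Proof.
move=> Hlt.
set s := eval_term t' x - eval_term t x.
have Hs : 0 < s by rewrite subr_gt0.
have hA := csum_ge0 t; have hB := csum_ge0 t'.
set K := csum t + csum t' + 1.
have HK : 0 < K by rewrite /K; lra.
exists (s / K); first by rewrite divr_gt0.
move=> e He HeT y Hy.
have E : s / K * K = s by rewrite mulfVK // gt_eqF.
have b1 := diff_bound t Hy; have b2 := diff_bound t' Hy.
move: b1 b2; rewrite !ler_norml => /andP [b1 b1'] /andP [b2 b2'].
have : (csum t + csum t') * e <= s.
  rewrite -E; apply: le_trans (_ : K * e <= _).
  - rewrite /K ler_wpM2r ?ltW //; lra.
  - by rewrite [s / K * K]mulrC ler_pM2l.
rewrite /s => H; lra.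
Qed.

Lemma nokink_smooth (R : realType) n (f : trop_poly R n) x :
  f != [::] -> ~ Kink f x -> pl_smooth_at (trop_eval f) x.
Proof.
move=> Hf Hk.
have [t Ht Et] := trop_ex x Hf.
have Hall : forall t', t' \in f -> t' = t \/ eval_term t x < eval_term t' x.
  move=> t' Ht'.
  have := trop_le x Ht'; rewrite Et le_eqVlt => /orP [/eqP E|]; last by right.
  left; have [Hsl|Hsl] := eqVneq t'.1 t.1.
  - move: E; rewrite /eval_term Hsl => /addrI E.
    by case: t' t Hsl E {Ht' Ht Et} => [a b] [a' b'] /= -> ->.
  - exfalso; apply: Hk; exists t', t; split => //; by rewrite -?E -?Et.
pose Q := fun t' e => forall y : 'I_n -> R, (forall j, `|y j - x j| < e) ->
     eval_term t y <= eval_term t' y.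
have Hpre : forall t', t' \in f -> exists2 T : R, 0 < T & forall e, 0 < e -> e <= T -> Q t' e.
  move=> t' Ht'; case: (Hall t' Ht') => [->|Hlt].
  - by exists 1 => // *; rewrite /Q => *; rewrite lexx.
  - exact: cont_one.
have [T HT HQ] := common_pos Hpre.
exists T, (fun j => (t.1 j)%:R), t.2; split => // y Hy.
apply/le_anti/andP; split; first exact: trop_le.
have [t' Ht' ->] := trop_ex y Hf.
exact: (HQ T HT (lexx _) t' Ht' y Hy).
Qed.

Lemma kink_iff (R : realType) n (f : trop_poly R n) x :
  f != [::] -> (Kink f x <-> trop_hypersurface f x).
Proof.
move=> Hf; split; first exact: kink_nonsmooth.
move=> Hv; apply: NNPP => Hk; apply: Hv; exact: nokink_smooth.
Qed.

Definition tmul (R : realType) n (t1 t2 : trop_term R n) : trop_term R n :=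
  ([ffun i => (t1.1 i + t2.1 i)%N], t1.2 + t2.2).

Definition pmul (R : realType) n (f g : trop_poly R n) : trop_poly R n :=
  [seq tmul t1 t2 | t1 <- f, t2 <- g].

Lemma eval_tmul (R : realType) n (t1 t2 : trop_term R n) x :
  eval_term (tmul t1 t2) x = eval_term t1 x + eval_term t2 x.
Proof.
rewrite /eval_term /tmul /=.
under eq_bigr => i _ do rewrite ffunE natrD mulrDl.
rewrite big_split /=; ring.
Qed.

Lemma pmul_nil (R : realType) n (f g : trop_poly R n) :
  f != [::] -> g != [::] -> pmul f g != [::].
Proof. by case: f => // t f _; case: g. Qed.

Lemma trop_pmul (R : realType) n (f g : trop_poly R n) x :
  f != [::] -> g != [::] -> trop_eval (pmul f g) x = trop_eval f x + trop_eval g x.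
Proof.
move=> Hf Hg; apply/le_anti/andP; split.
- have [t1 H1 ->] := trop_ex x Hf; have [t2 H2 ->] := trop_ex x Hg.
  by rewrite -eval_tmul trop_le // /pmul allpairs_f.
- have [p Hp ->] := trop_ex x (pmul_nil Hf Hg).
  case/allpairsP: Hp => [[t1 t2] /= [H1 H2 ->]].
  by rewrite eval_tmul lerD // trop_le.
Qed.

Lemma kink_pmul (R : realType) n (f g : trop_poly R n) x :
  f != [::] -> g != [::] -> (Kink (pmul f g) x <-> Kink f x \/ Kink g x).
Proof.
move=> Hf Hg; split.
- move=> [p1 [p2 [Hp1 Hp2 E1 E2 Hne]]].
  move: E1 E2 Hne; rewrite trop_pmul //.
  case/allpairsP: Hp1 => [[a1 b1] /= [Ha1 Hb1 ->]].
  case/allpairsP: Hp2 => [[a2 b2] /= [Ha2 Hb2 ->]].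
  rewrite !eval_tmul => E1 E2 Hne.
  have la1 := trop_le x Ha1; have lb1 := trop_le x Hb1.
  have la2 := trop_le x Ha2; have lb2 := trop_le x Hb2.
  have [Ha|Ha] := eqVneq a1.1 a2.1; last first.
    left; exists a1, a2; split => //; lra.
  have [Hb|Hb] := eqVneq b1.1 b2.1; last first.
    right; exists b1, b2; split => //; lra.
  by move: Hne; rewrite /tmul /= Ha Hb eqxx.
- have key : forall (f g : trop_poly R n), f != [::] -> g != [::] -> Kink f x ->
     Kink (pmul f g) x /\ Kink (pmul g f) x.
    move=> f' g' Hf' Hg' [a1 [a2 [H1 H2 E1 E2 Hne]]].
    have [b Hb Eb] := trop_ex x Hg'.
    split.
    + exists (tmul a1 b), (tmul a2 b); split; rewrite ?allpairs_f //.
      * by rewrite trop_pmul // eval_tmul E1 Eb.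
      * by rewrite trop_pmul // eval_tmul E2 Eb.
      * apply: contra Hne => /eqP E; apply/eqP/ffunP => i.
        by have := congr1 (fun h : {ffun 'I_n -> nat} => h i) E; rewrite /= !ffunE => /addIn.
    + exists (tmul b a1), (tmul b a2); split; rewrite ?allpairs_f //.
      * by rewrite trop_pmul // eval_tmul E1 Eb addrC.
      * by rewrite trop_pmul // eval_tmul E2 Eb addrC.
      * apply: contra Hne => /eqP E; apply/eqP/ffunP => i.
        by have := congr1 (fun h : {ffun 'I_n -> nat} => h i) E; rewrite /= !ffunE => /addnI.
  case=> Hk.
  + by case: (key f g Hf Hg Hk).
  + by case: (key g f Hg Hf Hk).
Qed.

Definition prods (R : realType) n (A B : seq (trop_poly R n)) : seq (trop_poly R n) :=
  [seq pmul f g | f <- A, g <- B].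

Lemma prods_nil (R : realType) n (A B : seq (trop_poly R n)) :
  (forall f, f \in A -> f != [::]) -> (forall f, f \in B -> f != [::]) ->
  forall h, h \in prods A B -> h != [::].
Proof.
move=> HA HB h /allpairsP [[f g] /= [Hf Hg ->]]; exact: pmul_nil (HA _ Hf) (HB _ Hg).
Qed.

Lemma kink_prods (R : realType) n (A B : seq (trop_poly R n)) x :
  (forall f, f \in A -> f != [::]) -> (forall f, f \in B -> f != [::]) ->
  ((forall h, h \in prods A B -> Kink h x) <->
   (forall f, f \in A -> Kink f x) \/ (forall g, g \in B -> Kink g x)).
Proof.
move=> HA HB; split.
- move=> H; case: (classic (forall f, f \in A -> Kink f x)) => [|Hn]; first by left.
  right => g Hg.
  have [f [Hf Hkf]] : exists f, f \in A /\ ~ Kink f x.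
    apply: NNPP => Hc; apply: Hn => f Hf; apply: NNPP => Hk; apply: Hc; by exists f.
  have := H _ (allpairs_f (@pmul R n) Hf Hg).
  by move/(kink_pmul x (HA _ Hf) (HB _ Hg)) => -[].
- move=> Hor h /allpairsP [[f g] /= [Hf Hg ->]].
  apply/(kink_pmul x (HA _ Hf) (HB _ Hg)); case: Hor => H; [left|right]; exact: H.
Qed.

Definition posn (z : int) : nat := match z with Posz k => k | Negz _ => 0%N end.
Definition negn (z : int) : nat := match z with Posz _ => 0%N | Negz k => k.+1 end.

Lemma posnegE (R : realType) (z : int) : (posn z)%:R - (negn z)%:R = z%:~R :> R.
Proof. by case: z => k /=; rewrite ?subr0 // NegzE intrN sub0r. Qed.

Lemma posneg_ne (z : int) k : z != 0 -> (posn z + k)%N != (negn z + k)%N.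
Proof. case: z => m /=; rewrite ?eqn_add2r //; by case: m. Qed.

Definition PS (R : realType) n (g : {ffun 'I_n -> int}) (x : 'I_n -> R) : R :=
  \sum_(i < n) (posn (g i))%:R * x i.
Definition NS (R : realType) n (g : {ffun 'I_n -> int}) (x : 'I_n -> R) : R :=
  \sum_(i < n) (negn (g i))%:R * x i.

Lemma PNS (R : realType) n (g : {ffun 'I_n -> int}) (x : 'I_n -> R) :
  PS g x - NS g x = int_form g x.
Proof.
rewrite /PS /NS /int_form -sumrB; apply: eq_bigr => i _.
by rewrite -mulrBl posnegE.
Qed.

Lemma eval2 (R : realType) n (p q : 'I_n -> nat) (b : R) x :
  eval_term ([ffun i => (p i + q i)%N], b) x =
  \sum_(i < n) (p i)%:R * x i + \sum_(i < n) (q i)%:R * x i + b.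
Proof.
rewrite /eval_term /=; under eq_bigr => i _ do rewrite ffunE natrD mulrDl.
by rewrite big_split.
Qed.

Lemma eval1 (R : realType) n (p : 'I_n -> nat) (b : R) x :
  eval_term ([ffun i => p i], b) x = \sum_(i < n) (p i)%:R * x i + b.
Proof.
by rewrite /eval_term /=; under eq_bigr => i _ do rewrite ffunE.
Qed.

Definition hyp (R : realType) n (h : {ffun 'I_n -> int}) (c : int) : trop_poly R n :=
  [:: ([ffun i => posn (h i)], 0); ([ffun i => negn (h i)], c%:~R)].

Definition half (R : realType) n (h : {ffun 'I_n -> int}) (c : int) (r : int_constraint n)
  : trop_poly R n :=
  [:: ([ffun i => (posn (h i) + posn (r.1 i))%N], 0);
      ([ffun i => (negn (h i) + posn (r.1 i))%N], c%:~R);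
      ([ffun i => (posn (h i) + negn (r.1 i))%N], (r.2)%:~R)].

Lemma ffun_ne n (p q : 'I_n -> nat) i : p i != q i -> [ffun j => p j] != [ffun j => q j].
Proof.
move=> H; apply: contra H => /eqP E.
by have := congr1 (fun h : {ffun 'I_n -> nat} => h i) E; rewrite /= !ffunE => ->.
Qed.

Lemma kink_hyp (R : realType) n (h : {ffun 'I_n -> int}) (c : int) (x : 'I_n -> R) :
  (exists i, h i != 0) -> (Kink (hyp R h c) x <-> int_form h x = c%:~R).
Proof.
move=> [i Hi].
set u := ([ffun i => posn (h i)], 0 : R); set v := ([ffun i => negn (h i)], c%:~R : R).
have Eu : eval_term u x = PS h x by rewrite /u eval1 addr0.
have Ev : eval_term v x = NS h x + c%:~R by rewrite /v eval1.
have P := PNS h x.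
have Hne : u.1 != v.1.
  by apply: (@ffun_ne n (fun j => posn (h j)) (fun j => negn (h j)) i); rewrite -(addn0 (posn _)) -(addn0 (negn _)) posneg_ne.
have mu : u \in hyp R h c by rewrite !inE eqxx.
have mv : v \in hyp R h c by rewrite !inE eqxx orbT.
have lu := trop_le x mu; have lv := trop_le x mv.
split.
- move=> [t1 [t2 [H1 H2 E1 E2 Hn]]].
  move: H1 H2 Hn E1 E2; rewrite !inE => /orP [/eqP ->|/eqP ->] /orP [/eqP ->|/eqP ->];
    rewrite ?eqxx // => _; rewrite ?Eu ?Ev => E1 E2; move: lu lv; rewrite ?Eu ?Ev => lu lv; lra.
- move=> E; exists u, v; split => //.
  + apply/(attain_iff x mu) => t'; rewrite !inE => /orP [/eqP ->|/eqP ->]; rewrite ?Eu ?Ev; lra.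
  + apply/(attain_iff x mv) => t'; rewrite !inE => /orP [/eqP ->|/eqP ->]; rewrite ?Eu ?Ev; lra.
Qed.

Lemma kink_half (R : realType) n (h : {ffun 'I_n -> int}) (c : int) r (x : 'I_n -> R) :
  (exists i, h i != 0) -> int_form h x = c%:~R ->
  (Kink (half R h c r) x <-> int_form r.1 x <= (r.2)%:~R).
Proof.
move=> [i Hi] Hx.
set u := ([ffun i => (posn (h i) + posn (r.1 i))%N], 0 : R).
set v := ([ffun i => (negn (h i) + posn (r.1 i))%N], c%:~R : R).
set w := ([ffun i => (posn (h i) + negn (r.1 i))%N], (r.2)%:~R : R).
have Eu : eval_term u x = PS h x + PS r.1 x by rewrite /u eval2 addr0.
have Ev : eval_term v x = NS h x + PS r.1 x + c%:~R by rewrite /v eval2.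
have Ew : eval_term w x = PS h x + NS r.1 x + (r.2)%:~R by rewrite /w eval2.
have P1 := PNS h x; have P2 := PNS r.1 x.
have Hne : u.1 != v.1.
  by apply: (@ffun_ne n _ _ i); rewrite posneg_ne.
have mu : u \in half R h c r by rewrite !inE eqxx.
have mv : v \in half R h c r by rewrite !inE eqxx orbT.
have mw : w \in half R h c r by rewrite !inE eqxx !orbT.
have lu := trop_le x mu; have lv := trop_le x mv; have lw := trop_le x mw.
move: lu lv lw; rewrite Eu Ev Ew => lu lv lw.
split.
- move=> [t1 [t2 [H1 H2 E1 E2 Hn]]].
  move: H1 H2 Hn E1 E2; rewrite !inE => /or3P [/eqP ->|/eqP ->|/eqP ->] /or3P [/eqP ->|/eqP ->|/eqP ->];
    rewrite ?eqxx // => _; rewrite ?Eu ?Ev ?Ew => E1 E2; lra.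
- move=> E; exists u, v; split => //.
  + apply/(attain_iff x mu) => t'; rewrite !inE => /or3P [/eqP ->|/eqP ->|/eqP ->]; rewrite ?Eu ?Ev ?Ew; lra.
  + apply/(attain_iff x mv) => t'; rewrite !inE => /or3P [/eqP ->|/eqP ->|/eqP ->]; rewrite ?Eu ?Ev ?Ew; lra.
Qed.

Lemma form_mid (R : realType) n (g : {ffun 'I_n -> int}) (x y : 'I_n -> R) :
  int_form g (fun j => (x j + y j) / 2) = (int_form g x + int_form g y) / 2.
Proof.
rewrite /int_form -big_split mulr_suml; apply: eq_bigr => j _ /=; ring.
Qed.

Lemma form_bump (R : realType) n (g : {ffun 'I_n -> int}) (x : 'I_n -> R) i d :
  int_form g (bump x i d) = int_form g x + (g i)%:~R * d.
Proof. by rewrite /int_form (sum_bump (fun j => (g j)%:~R)). Qed.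

Lemma form_zero (R : realType) n (g : {ffun 'I_n -> int}) (x : 'I_n -> R) :
  (forall i, g i = 0) -> int_form g x = 0.
Proof. by move=> H; rewrite /int_form big1 // => j _; rewrite H mul0r. Qed.

Lemma hyper_exists (R : realType) n (P : rat_polyhedron n) (x1 : 'I_n -> R) :
  in_polyhedron P x1 -> positive_codim (fun x : 'I_n -> R => in_polyhedron P x) ->
  exists (h : {ffun 'I_n -> int}) (c : int), (exists i, h i != 0) /\
    forall x : 'I_n -> R, in_polyhedron P x -> int_form h x = c%:~R.
Proof.
move=> Hx1 [a [c' [[i Hai] Ha]]].
apply: NNPP => Hno.
have Heq : forall r, r \in P.1 -> forall j, r.1 j = 0.
  move=> r Hr j; apply/eqP/negPn/negP => Hj; apply: Hno.
  exists r.1, r.2; split; first by exists j.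
  by move=> x [Hx _]; apply: Hx.
have Hin : forall r, r \in P.2 -> (forall j, r.1 j = 0) \/
    exists2 y : 'I_n -> R, in_polyhedron P y & int_form r.1 y < (r.2)%:~R.
  move=> r Hr; case: (classic (exists j, r.1 j != 0)) => [[j Hj]|Hz]; last first.
    left => j; apply/eqP/negPn/negP => Hj; apply: Hz; by exists j.
  right; apply: NNPP => Hns; apply: Hno; exists r.1, r.2; split; first by exists j.
  move=> x Hx; have := (Hx.2 r Hr); rewrite le_eqVlt => /orP [/eqP //|Hlt].
  by exfalso; apply: Hns; exists x.
have [x0 [Hx0 Hs0]] : exists x0 : 'I_n -> R, in_polyhedron P x0 /\ forall r, r \in P.2 ->
    (forall j, r.1 j = 0) \/ int_form r.1 x0 < (r.2)%:~R.
  suff : forall s : seq (int_constraint n), {subset s <= P.2} -> exists x0 : 'I_n -> R, in_polyhedron P x0 /\ forall r, r \in s ->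
    (forall j, r.1 j = 0) \/ int_form r.1 x0 < (r.2)%:~R.
    by move=> H; apply: H.
  elim=> [|r s IH] Hsub; first by exists x1.
  have [|x0 [Hx0 Hs]] := IH; first by move=> r' Hr'; apply: Hsub; rewrite inE Hr' orbT.
  have Hr : r \in P.2 by apply: Hsub; rewrite inE eqxx.
  case: (Hin r Hr) => [Hz|[y Hy Hlt]].
    exists x0; split => // r'; rewrite inE => /orP [/eqP ->|Hr']; [by left|exact: Hs].
  exists (fun j => (x0 j + y j) / 2); split.
  - split.
    + move=> e He; rewrite form_mid (Hx0.1 e He) (Hy.1 e He); lra.
    + move=> e He; rewrite form_mid; have := Hx0.2 e He; have := Hy.2 e He; lra.
  - move=> r'; rewrite inE => /orP [/eqP ->|Hr'].
    + right; rewrite form_mid; have := Hx0.2 r Hr; lra.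
    + case: (Hs r' Hr') => [|Hl]; first by left.
      have Hr2 : r' \in P.2 by apply: Hsub; rewrite inE Hr' orbT.
      right; rewrite form_mid; have := Hy.2 r' Hr2; lra.
pose Q := fun (r : int_constraint n) (t : R) => int_form r.1 (bump x0 i t) <= (r.2)%:~R.
have Hpre : forall r, r \in P.2 -> exists2 T : R, 0 < T & forall t, 0 < t -> t <= T -> Q r t.
  move=> r Hr; case: (Hs0 r Hr) => [Hz|Hlt].
  - exists 1 => // t _ _; rewrite /Q form_bump Hz mul0r addr0; exact: Hx0.2.
  - set s := (r.2)%:~R - int_form r.1 x0.
    have Hs : 0 < s by rewrite subr_gt0.
    set g : R := (r.1 i)%:~R.
    have hg := ler_norm g; have hg0 : 0 <= `|g| := normr_ge0 g.
    have HK : 0 < `|g| + 1 by lra.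
    exists (s / (`|g| + 1)); first by rewrite divr_gt0.
    move=> t Ht HtT; rewrite /Q form_bump -/g.
    have E : s / (`|g| + 1) * (`|g| + 1) = s by rewrite mulfVK // gt_eqF.
    have : g * t <= s by nra.
    rewrite /s; lra.
have [T HT HQ] := common_pos Hpre.
have HinP : in_polyhedron P (bump x0 i T).
  split.
  - move=> e He; rewrite form_bump (Heq e He i) mul0r addr0; exact: Hx0.1.
  - move=> e He; exact: (HQ T HT (lexx _) e He).
have E1 := Ha _ HinP; have E0 := Ha _ Hx0.
move: E1; rewrite sum_bump E0 => E1.
have : a i * T == 0 by apply/eqP; lra.
by rewrite mulf_eq0 (negbTE Hai) gt_eqF.
Qed.

Definition negc n (e : int_constraint n) : int_constraint n := ([ffun i => - e.1 i], - e.2).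
Definition ineqs n (P : rat_polyhedron n) := P.2 ++ P.1 ++ map (@negc n) P.1.

Lemma form_neg (R : realType) n (g : {ffun 'I_n -> int}) (x : 'I_n -> R) :
  int_form [ffun i => - g i] x = - int_form g x.
Proof.
rewrite /int_form -sumrN; apply: eq_bigr => i _; by rewrite ffunE intrN mulNr.
Qed.

Lemma in_P_ineqs (R : realType) n (P : rat_polyhedron n) (x : 'I_n -> R) :
  in_polyhedron P x <-> forall r, r \in ineqs P -> int_form r.1 x <= (r.2)%:~R.
Proof.
split.
- move=> [H1 H2] r; rewrite /ineqs !mem_cat => /or3P [Hr|Hr|].
  + exact: H2.
  + by rewrite (H1 r Hr).
  + case/mapP => e He ->; rewrite /negc /= form_neg intrN (H1 e He); lra.
- move=> H; split.
  + move=> e He; apply/le_anti/andP; split.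
    * by apply: H; rewrite /ineqs !mem_cat He orbT.
    * have := H (negc e); rewrite /negc /= form_neg intrN lerN2; apply.
      by rewrite /ineqs !mem_cat (map_f (@negc n) He) !orbT.
  + by move=> e He; apply: H; rewrite /ineqs mem_cat He.
Qed.

Definition cst (R : realType) n : trop_poly R n := [:: ([ffun => 0%N], 0)].

Lemma kink_cst (R : realType) n (x : 'I_n -> R) : ~ Kink (cst R n) x.
Proof.
move=> [t1 [t2 [H1 H2 _ _ Hn]]]; move: H1 H2 Hn; rewrite !inE => /eqP -> /eqP ->.
by rewrite eqxx.
Qed.

Lemma single_P (R : realType) n (P : rat_polyhedron n) :
  positive_codim (fun x : 'I_n -> R => in_polyhedron P x) ->
  exists fs : seq (trop_poly R n), (forall f, f \in fs -> f != [::]) /\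
    forall x, in_polyhedron P x <-> (forall f, f \in fs -> Kink f x).
Proof.
move=> Hpc.
case: (classic (exists x1 : 'I_n -> R, in_polyhedron P x1)) => [[x1 Hx1]|Hemp]; last first.
  exists [:: cst R n]; split; first by move=> f; rewrite inE => /eqP ->.
  move=> x; split; first by move=> Hx; exfalso; apply: Hemp; exists x.
  by move=> H; exfalso; apply: (@kink_cst R n x); apply: H; rewrite inE.
have [h [c [Hh HP]]] := hyper_exists Hx1 Hpc.
exists (hyp R h c :: map (half R h c) (ineqs P)); split.
  by move=> f; rewrite inE => /orP [/eqP ->|/mapP [r _ ->]].
move=> x; split.
- move=> Hx f; rewrite inE => /orP [/eqP ->|/mapP [r Hr ->]].
  + by apply/kink_hyp => //; apply: HP.
  + apply/kink_half => //; first exact: HP.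
    by move/in_P_ineqs: Hx; apply.
- move=> H.
  have Hc : int_form h x = c%:~R by apply/(kink_hyp c x Hh); apply: H; rewrite inE eqxx.
  apply/in_P_ineqs => r Hr.
  apply/(kink_half r Hh Hc); apply: H; by rewrite inE (map_f (half R h c) Hr) orbT.
Qed.

Lemma union_main (R : realType) n (Ps : seq (rat_polyhedron n)) :
  (forall P, P \in Ps -> positive_codim (fun x : 'I_n -> R => in_polyhedron P x)) ->
  exists fs : seq (trop_poly R n), (forall f, f \in fs -> f != [::]) /\
    forall x : 'I_n -> R, (exists2 P, P \in Ps & in_polyhedron P x) <->
                          (forall f, f \in fs -> Kink f x).
Proof.
elim: Ps => [|P Ps IH] H.
  exists [:: cst R n]; split; first by move=> f; rewrite inE => /eqP ->.
  move=> x; split; first by case.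
  by move=> Hk; exfalso; apply: (@kink_cst R n x); apply: Hk; rewrite inE.
have [fs1 [N1 E1]] := single_P (H P (mem_head _ _)).
have [fs2 [N2 E2]] : exists fs : seq (trop_poly R n), (forall f, f \in fs -> f != [::]) /\
    forall x : 'I_n -> R, (exists2 P, P \in Ps & in_polyhedron P x) <->
                          (forall f, f \in fs -> Kink f x).
  by apply: IH => P' HP'; apply: H; rewrite inE HP' orbT.
exists (prods fs1 fs2); split; first exact: prods_nil.
move=> x; rewrite kink_prods // -E1 -E2; split.
- move=> [P' ]; rewrite inE => /orP [/eqP ->|HP'] Hx; [by left|by right; exists P'].
- case=> [Hx|[P' HP' Hx]]; [exists P|exists P'] => //; rewrite inE ?eqxx ?HP' ?orbT //.
Qed.

Unset Implicit Arguments.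

Theorem corollary1p2 (R : realType) (n : nat) (Ps : seq (rat_polyhedron n)) :
  (forall P, P \in Ps -> positive_codim (fun x : 'I_n -> R => in_polyhedron P x)) ->
  exists fs : seq (trop_poly R n),
    (forall f, f \in fs -> f != [::]) /\
    (forall x : 'I_n -> R,
       (exists2 P, P \in Ps & in_polyhedron P x) <-> trop_prevariety fs x).
Proof.
move=> H; have [fs [N E]] := union_main H.
exists fs; split => // x; rewrite E; split.
- by move=> Hk f Hf; apply/kink_iff; [exact: N|exact: Hk].
- by move=> Hv f Hf; apply/kink_iff; [exact: N|exact: Hv].
Qed.
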